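(* Let $\mathcal G$ be a doubly connected molecular graph. Construct $\mathcal G_{new}$ from $\mathcal G$ as follows: add a new molecule $\mathcal M_{new}$; replace a diffusive edge $b_0$ of $\mathcal G$ joining molecules $\mathcal M_1$ and $\mathcal M_2$ by two diffusive edges, $b_1$ joining $\mathcal M_1$ and $\mathcal M_{new}$ and $b_2$ joining $\mathcal M_2$ and $\mathcal M_{new}$; and replace another diffusive edge $b\neq b_0$ of $\mathcal G$ joining molecules $\mathcal M_3$ and $\mathcal M_4$ by two diffusive edges, $b_3$ joining $\mathcal M_3$ and $\mathcal M_{new}$ and $b_4$ joining $\mathcal M_4$ and $\mathcal M_{new}$. If a blue solid edge is redundant in $\mathcal G$, then it is also redundant in $\mathcal G_{new}$.
   Context: A molecular graph is a finite multigraph whose vertices are called molecules and each of whose edges joins two distinct molecules and is either a diffusive edge or a blue solid edge (parallel edges are allowed). A molecular graph is doubly connected if there exist two disjoint sets of edges, $\mathcal B_{black}$ consisting only of diffusive edges and $\mathcal B_{blue}$ consisting only of blue solid or diffusive edges, such that each of $\mathcal B_{black}$ and $\mathcal B_{blue}$ contains a spanning tree of the set of all molecules. A blue solid edge $e$ of a doubly connected graph is redundant if the graph obtained by deleting $e$ is still doubly connected. *)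

(* Defs.v *)
From mathcomp Require Import all_boot.
Set Implicit Arguments. Unset Strict Implicit. Unset Printing Implicit Defensive.

(* A molecular graph: molecules V (finType), edge labels E (finType), an edge
   set S : {set E}, endpoint map [ends] (unordered: the pair's order is
   irrelevant) and a boolean [diffusive] (true = diffusive edge, false = blue
   solid edge).  Parallel edges are allowed (distinct labels, same ends). *)
Section MolecularGraph.
Variables (V E : finType) (ends : E -> V * V) (diffusive : pred E).

Definition adjB (B : {set E}) : rel V := fun x y =>
  [exists e in B, (ends e == (x, y)) || (ends e == (y, x))].

Definition spans (B : {set E}) : Prop := forall x y : V, connect (adjB B) x y.

Definition spanning_tree (T : {set E}) : Prop :=
  spans T /\ (forall e, e \in T -> ~ spans (T :\ e)).

Definition contains_spanning_tree (B : {set E}) : Prop :=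
  exists T : {set E}, T \subset B /\ spanning_tree T.

Definition molecular (S : {set E}) : Prop :=
  forall e, e \in S -> (ends e).1 != (ends e).2.

Definition doubly_connected (S : {set E}) : Prop :=
  exists Bblack Bblue : {set E},
    [/\ Bblack \subset S, Bblue \subset S, [disjoint Bblack & Bblue],
        (forall e, e \in Bblack -> diffusive e) &
        contains_spanning_tree Bblack /\ contains_spanning_tree Bblue].

Definition redundant (S : {set E}) (e : E) : Prop :=
  [/\ doubly_connected S, e \in S, ~~ diffusive e & doubly_connected (S :\ e)].

End MolecularGraph.

(* The construction of G_new from G (edge set [setT] of E), b0, b.
   Molecules: option V, with None = M_new.  Edges: E + 'I_4, where inl e is an
   old edge and inr 0,1,2,3 are b1,b2,b3,b4. *)
Section Construction.
Variables (V E : finType) (ends : E -> V * V) (diffusive : pred E) (b0 b : E).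

Definition new_ends (x : E + 'I_4) : option V * option V :=
  match x with
  | inl e => (Some (ends e).1, Some (ends e).2)
  | inr i => match val i with
             | 0 => (Some (ends b0).1, None)
             | 1 => (Some (ends b0).2, None)
             | 2 => (Some (ends b).1, None)
             | _ => (Some (ends b).2, None)
             end
  end.

Definition new_diffusive (x : E + 'I_4) : bool :=
  match x with inl e => diffusive e | inr _ => true end.

Definition new_edges : {set E + 'I_4} :=
  (inl @: (setT :\ b0 :\ b)) :|: [set inr i | i : 'I_4].

End Construction.

(* Main.v *)
Require Import Defs.
From mathcomp Require Import all_boot.
Set Implicit Arguments. Unset Strict Implicit. Unset Printing Implicit Defensive.

Section Gen.
Variables (V E : finType) (ends : E -> V * V).
Implicit Types B C T S : {set E}.

Lemma adjB_sym B : symmetric (adjB ends B).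
Proof.
move=> x y; rewrite /adjB; apply: eq_existsb => g.
by rewrite (orbC (ends g == (x, y))).
Qed.

Lemma connect_symB B : connect_sym (adjB ends B).
Proof. exact/sym_connect_sym/adjB_sym. Qed.

Lemma adjB_edge B g : g \in B -> adjB ends B (ends g).1 (ends g).2.
Proof.
move=> gB; apply/existsP; exists g; rewrite gB /=.
by case: (ends g) => a c; rewrite eqxx.
Qed.

Lemma adjB_mono B C x y : B \subset C -> adjB ends B x y -> adjB ends C x y.
Proof.
move=> sBC /existsP [g /andP [gB h]]; apply/existsP; exists g.
by rewrite (subsetP sBC _ gB).
Qed.

Lemma spans_mono B C : B \subset C -> spans ends B -> spans ends C.
Proof.
move=> sBC sp x y; apply: connect_sub (sp x y) => u v h.
by apply: connect1; apply: adjB_mono h.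
Qed.

Lemma tree_spans B : contains_spanning_tree ends B -> spans ends B.
Proof. by case=> T [sTB [spT _]]; apply: spans_mono spT. Qed.

Lemma spans_tree B : spans ends B -> contains_spanning_tree ends B.
Proof.
move=> sp.
pose P := fun T : {set E} => (T \subset B) && [forall x, forall y, connect (adjB ends T) x y].
have spb : forall T, [forall x, forall y, connect (adjB ends T) x y] <-> spans ends T.
  move=> T; split; first by move=> /forallP h x y; move/forallP: (h x); apply.
  by move=> h; apply/forallP => x; apply/forallP => y; apply: h.
have [T /minsetP [/andP [sTB /spb spT] minT]] : {T | minset P T}.
  apply: ex_minset; exists B; rewrite /P subxx /=; exact/spb.
exists T; split => //; split => // g gT spg.
have := minT (T :\ g); rewrite /P (subset_trans (subD1set T g) sTB) /=.
move/(_ (proj2 (spb _) spg) (subD1set T g)) => /setP /(_ g).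
by rewrite !inE eqxx gT.
Qed.

Lemma dc_mono (diffusive : pred E) S (S2 : {set E}) :
  S \subset S2 -> doubly_connected ends diffusive S -> doubly_connected ends diffusive S2.
Proof.
move=> sS [Bk [Bl [sk sl dkl dk tr]]]; exists Bk, Bl; split=> //.
- exact: subset_trans sS.
- exact: subset_trans sS.
Qed.

End Gen.

Lemma connect_homo (T U : finType) (e : rel T) (e' : rel U) (f : T -> U) :
  (forall x y, e x y -> connect e' (f x) (f y)) ->
  forall x y, connect e x y -> connect e' (f x) (f y).
Proof.
move=> h x y /connectP [p pth ->]; elim: p x pth => [|z p IH] x /=.
  by move=> _; exact: connect0.
by case/andP => exz pz; apply: connect_trans (h _ _ exz) (IH _ pz).
Qed.

Lemma connect_closed (T : finType) (e : rel T) (K : pred T) :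
  (forall x y, K x -> e x y -> K y) ->
  forall x y, connect e x y -> K x -> K y.
Proof.
move=> h x y /connectP [p pth ->]; elim: p x pth => [|z p IH] x //=.
by case/andP => exz pz Kx; apply: (IH _ pz); apply: h Kx exz.
Qed.

Section Constr.
Variables (V E : finType) (ends : E -> V * V) (diffusive : pred E) (b0 b : E).

Notation N := (new_ends ends b0 b).
Implicit Types (Bn : {set E + 'I_4}) (B X S Bk Bl : {set E}) (W Wk Wl : {set 'I_4}).
Definition i0 : 'I_4 := @Ordinal 4 0 isT.
Definition i1 : 'I_4 := @Ordinal 4 1 isT.
Definition i2 : 'I_4 := @Ordinal 4 2 isT.
Definition i3 : 'I_4 := @Ordinal 4 3 isT.

Definition M (i : 'I_4) : V :=
  match val i with
  | 0 => (ends b0).1 | 1 => (ends b0).2 | 2 => (ends b).1 | _ => (ends b).2 end.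

Lemma NinrE i : N (inr i) = (Some (M i), None).
Proof. by case: i => [[|[|[|[|n]]]] Hi]. Qed.

Definition mk (X : {set E}) (W : {set 'I_4}) : {set E + 'I_4} :=
  [set x | match x with inl g => g \in X | inr i => i \in W end].

Lemma mk_inl X W g : (inl g \in mk X W) = (g \in X).
Proof. by rewrite inE. Qed.
Lemma mk_inr X W i : (inr i \in mk X W) = (i \in W).
Proof. by rewrite inE. Qed.

Notation H Bn := (connect (adjB N Bn)).

Lemma H_inr Bn i : inr i \in Bn -> H Bn (Some (M i)) None.
Proof. by move=> h; apply: connect1; have := adjB_edge N h; rewrite NinrE. Qed.

Lemma H_inl Bn g : inl g \in Bn -> H Bn (Some (ends g).1) (Some (ends g).2).
Proof. by move=> h; apply: connect1; have := adjB_edge N h. Qed.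

Lemma lift (Bn : {set E + 'I_4}) (B : {set E}) :
  spans ends B ->
  (forall g, g \in B -> g != b0 -> g != b -> inl g \in Bn) ->
  (b0 \in B -> H Bn (Some (M i0)) (Some (M i1))) ->
  (b \in B -> H Bn (Some (M i2)) (Some (M i3))) ->
  (exists z, H Bn (Some z) None) ->
  spans N Bn.
Proof.
move=> sp hin h0 h1 [z hz].
have sym := connect_symB N Bn.
have HS : forall x y, H Bn (Some x) (Some y).
  move=> x y; apply: (connect_homo (e := adjB ends B) (f := Some)) (sp x y).
  move=> u v /existsP [g /andP [gB]].
  have Hg : H Bn (Some (ends g).1) (Some (ends g).2).
    case: (eqVneq g b0) => [e0|n0]; first by move: gB; rewrite e0; apply: h0.
    case: (eqVneq g b) => [e1|n1]; first by move: gB; rewrite e1; apply: h1.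
    exact/H_inl/hin.
  case/orP => /eqP e; rewrite e /= in Hg => //.
  by rewrite sym.
case=> [x|] [y|] //.
- by apply: connect_trans (HS x z) hz.
- by rewrite sym; apply: connect_trans (HS y z) hz.
Qed.

Lemma liftR Bn X u v : (forall g, g \in X -> inl g \in Bn) ->
  connect (adjB ends X) u v -> H Bn (Some u) (Some v).
Proof.
move=> hin; apply: connect_homo => x y /existsP [g /andP [gX]].
have Hg := H_inl (hin _ gX); have sym := connect_symB N Bn.
by case/orP => /eqP e; rewrite e /= in Hg => //; rewrite sym.
Qed.

Lemma H_pair Bn k l : inr k \in Bn -> inr l \in Bn -> H Bn (Some (M k)) (Some (M l)).
Proof.
move=> hk hl; apply: connect_trans (H_inr hk) _.
by rewrite connect_symB; apply: H_inr.
Qed.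

Lemma E0 : ends b0 = (M i0, M i1).
Proof. by rewrite /M /=; case: (ends b0). Qed.
Lemma Eb : ends b = (M i2, M i3).
Proof. by rewrite /M /=; case: (ends b). Qed.

Lemma hard B : spans ends B -> exists i, spans N (mk (B :\ b0 :\ b) (setT :\ i)).
Proof.
move=> sp; set X := B :\ b0 :\ b.
pose R := connect (adjB ends X).
have [i [j [ij r]]] : exists i j, i != j /\ R (M i) (M j).
  case: (boolP [exists i, exists j, (i != j) && R (M i) (M j)]).
    by move=> /existsP [i /existsP [j /andP [ij r]]]; exists i, j.
  move=> nex.
  have nR : forall i j, i != j -> R (M i) (M j) = false.
    move=> i j ij; apply/negbTE; apply: contra nex => r.
    by apply/existsP; exists i; apply/existsP; exists j; rewrite ij r.
  have symR : connect_sym (adjB ends X) := connect_symB ends X.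
  pose K := fun v => R (M i0) v || R (M i1) v.
  have cl : forall x y, K x -> adjB ends B x y -> K y.
    move=> x y Kx /existsP [g /andP [gB he]].
    case: (eqVneq g b0) => [e0|n0].
      move: he; rewrite e0 E0 => /orP [] /eqP [ex ey]; subst x y;
        by rewrite /K /R connect0 ?orbT.
    case: (eqVneq g b) => [e1|n1].
      move: he Kx; rewrite e1 Eb => /orP [] /eqP [ex ey]; subst x y;
        by rewrite /K !nR.
    have gX : g \in X by rewrite !inE n0 n1.
    have axy : adjB ends X x y by apply/existsP; exists g; rewrite gX.
    case/orP: Kx => r; apply/orP; [left|right]; exact: connect_trans r (connect1 axy).
  have := connect_closed cl (sp (M i0) (M i2)).
  rewrite /K /R connect0 /= -/R !nR //; first by move/(_ isT).
exists i.
have hin : forall g, g \in X -> inl g \in mk X (setT :\ i) by move=> g; rewrite mk_inl.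
have Hk : forall k, H (mk X (setT :\ i)) (Some (M k)) None.
  move=> k; case: (eqVneq k i) => [->|ki].
    apply: connect_trans (liftR hin r) _; apply: H_inr.
    by rewrite mk_inr !inE eq_sym ij.
  by apply: H_inr; rewrite mk_inr !inE ki.
have sym := connect_symB N (mk X (setT :\ i)).
apply: (lift sp).
- by move=> g gB n0 n1; rewrite mk_inl !inE n0 n1 gB.
- by move=> _; apply: connect_trans (Hk i0) _; rewrite sym.
- by move=> _; apply: connect_trans (Hk i2) _; rewrite sym.
- by exists (M i0).
Qed.

Lemma build S Bk Bl Wk Wl :
  Bk \subset S -> Bl \subset S -> [disjoint Bk & Bl] ->
  (forall g, g \in Bk -> diffusive g) -> [disjoint Wk & Wl] ->
  spans N (mk (Bk :\ b0 :\ b) Wk) -> spans N (mk (Bl :\ b0 :\ b) Wl) ->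
  doubly_connected N (new_diffusive diffusive) (mk (S :\ b0 :\ b) setT).
Proof.
move=> sk sl dkl dk dW spk spl.
exists (mk (Bk :\ b0 :\ b) Wk), (mk (Bl :\ b0 :\ b) Wl); split.
- apply/subsetP => -[g|k]; rewrite ?mk_inl ?mk_inr ?inE //.
  by case/and3P => -> -> /(subsetP sk) ->.
- apply/subsetP => -[g|k]; rewrite ?mk_inl ?mk_inr ?inE //.
  by case/and3P => -> -> /(subsetP sl) ->.
- apply/pred0P => -[g|k] /=; rewrite ?mk_inl ?mk_inr.
    apply/negbTE/negP => /andP []; rewrite !inE => /and3P [_ _ gk] /and3P [_ _ gl].
    by rewrite (disjointFr dkl gk) in gl.
  apply/negbTE/negP => /andP [kk kl].
  by rewrite (disjointFr dW kk) in kl.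
- by move=> -[g|k] //; rewrite mk_inl !inE => /and3P [_ _ /dk].
- by split; apply: spans_tree.
Qed.

Lemma newdc S : doubly_connected ends diffusive S ->
  doubly_connected N (new_diffusive diffusive) (mk (S :\ b0 :\ b) setT).
Proof.
move=> [Bk [Bl [sk sl dkl dk [tk tl]]]].
have spk := tree_spans tk; have spl := tree_spans tl.
have hinX : forall (Bx : {set E}) W g, g \in Bx -> g != b0 -> g != b -> inl g \in mk (Bx :\ b0 :\ b) W.
  by move=> Bx W g gB n0 n1; rewrite mk_inl !inE n0 n1 gB.
have d01 : [disjoint [set i0; i1] & [set i2; i3]].
  by apply/pred0P => -[[|[|[|[|n]]]] Hk]; rewrite !inE.
case: (boolP (b0 \in Bk)) => k0; case: (boolP (b \in Bk)) => kb.
- have [i spi] := hard spk.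
  apply: (build sk sl dkl dk _ spi (Wl := [set i])).
    by apply/pred0P => k /=; rewrite !inE; case: eqP.
  apply: (lift spl (hinX _ _)) => //.
  + by rewrite (disjointFr dkl k0).
  + by rewrite (disjointFr dkl kb).
  + by exists (M i); apply: H_inr; rewrite mk_inr !inE.
- apply: (build sk sl dkl dk d01).
    apply: (lift spk (hinX _ _)) => //.
    + by move=> _; apply: H_pair; rewrite mk_inr !inE.
    + by rewrite (negbTE kb).
    + by exists (M i0); apply: H_inr; rewrite mk_inr !inE.
  apply: (lift spl (hinX _ _)) => //.
  + by rewrite (disjointFr dkl k0).
  + by move=> _; apply: H_pair; rewrite mk_inr !inE.
  + by exists (M i2); apply: H_inr; rewrite mk_inr !inE.
- rewrite disjoint_sym in d01.
  apply: (build sk sl dkl dk d01).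
    apply: (lift spk (hinX _ _)) => //.
    + by rewrite (negbTE k0).
    + by move=> _; apply: H_pair; rewrite mk_inr !inE.
    + by exists (M i2); apply: H_inr; rewrite mk_inr !inE.
  apply: (lift spl (hinX _ _)) => //.
  + by move=> _; apply: H_pair; rewrite mk_inr !inE.
  + by rewrite (disjointFr dkl kb).
  + by exists (M i0); apply: H_inr; rewrite mk_inr !inE.
- have [i spi] := hard spl.
  apply: (build sk sl dkl dk _ _ spi (Wk := [set i])).
    by apply/pred0P => k /=; rewrite !inE; case: eqP.
  apply: (lift spk (hinX _ _)) => //.
  + by rewrite (negbTE k0).
  + by rewrite (negbTE kb).
  + by exists (M i); apply: H_inr; rewrite mk_inr !inE.
Qed.

End Constr.

Theorem claimA5 (V E : finType) (ends : E -> V * V) (diffusive : pred E)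
  (b0 b : E) :
  molecular ends setT ->
  doubly_connected ends diffusive setT ->
  diffusive b0 -> diffusive b -> b != b0 ->
  forall e : E, redundant ends diffusive setT e ->
  redundant (new_ends ends b0 b) (new_diffusive diffusive)
            (new_edges b0 b) (inl e).
Proof.
move=> _ _ d0 db _ e [dcT _ nde dcTe].
have ne0 : e != b0 by apply: contraNneq nde => ->.
have ne : e != b by apply: contraNneq nde => ->.
have inl_inj : injective (@inl E 'I_4) by move=> x y [].
split.
- apply: dc_mono (newdc b0 b dcT).
  apply/subsetP => -[g|k]; rewrite ?mk_inl ?mk_inr => h; rewrite /new_edges in_setU.
    by rewrite (mem_imset _ _ inl_inj) h.
  by apply/orP; right; apply: imset_f.
- by rewrite /new_edges in_setU (mem_imset _ _ inl_inj) !inE ne ne0.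
- by [].
- apply: dc_mono (newdc b0 b dcTe).
  apply/subsetP => -[g|k]; rewrite ?mk_inl ?mk_inr => h; rewrite !inE.
    move: h; rewrite !inE => /and4P [gb gb0 ge _] /=.
    rewrite (inj_eq inl_inj) ge /= (mem_imset _ _ inl_inj) !inE gb gb0 //.
  by apply/orP; right; apply: imset_f.
Qed.
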